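(* Let $A$ be a $d\times d$ reclusive matrix and $\vec{c}\in\mathbb{Z}^{d}$. Then $\|A\vec{c}\|_{\infty}\leq 1$ if and only if $\vec{c}=\langle c_{j}\rangle_{j=1}^{d}$ is a weak-alt-1 sequence.
   Context: A $d\times d$ matrix $A=(a_{ij})$ is reclusive if $a_{ij}=0$ for $i>j$, $a_{ii}=1$ for all $i$, and $a_{ij}>a_{ik}>0$ for all $i\le j<k$. A finite sequence $\langle c_i\rangle_{i=1}^n$ is alt-1 if it equals $\langle(-1)^i\rangle_{i=1}^n$ or $\langle(-1)^{i+1}\rangle_{i=1}^n$; it is weak-alt-1 if every term is $-1$, $0$ or $1$ and the subsequence of its nonzero terms is alt-1 (the empty sequence counts as alt-1, so the all-zero sequence is weak-alt-1). *)

(* Defs.v *)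
From mathcomp Require Import all_boot all_order all_algebra.
Set Implicit Arguments. Unset Strict Implicit. Unset Printing Implicit Defensive.
Import Order.TTheory GRing.Theory Num.Theory.
Local Open Scope ring_scope.

(* Indices are 0-based: i : 'I_d stands for the paper's index i+1. *)

Definition reclusive (R : realFieldType) (d : nat) (A : 'M[R]_d) : Prop :=
  (forall i j : 'I_d, (j < i)%N -> A i j = 0) /\
  (forall i : 'I_d, A i i = 1) /\
  (forall i j k : 'I_d, (i <= j)%N -> (j < k)%N -> A i k < A i j /\ 0 < A i k).

(* A finite sequence s = <s_1,...,s_n> (stored as a list, s_(i) = nth 0 s (i-1))
   is alt-1 if it equals <(-1)^i> or <(-1)^(i+1)>, i = 1..n. *)
Definition alt1 (s : seq int) : Prop :=
  (forall i : nat, (i < size s)%N -> nth 0 s i = (-1) ^+ i.+1) \/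
  (forall i : nat, (i < size s)%N -> nth 0 s i = (-1) ^+ i.+2).

Definition weak_alt1 (s : seq int) : Prop :=
  (forall x, x \in s -> x \in [:: -1; 0; 1]) /\
  alt1 [seq x <- s | x != 0].

Definition supnorm_le1 (R : realFieldType) (d : nat) (v : 'cV[R]_d) : Prop :=
  forall i : 'I_d, `|v i 0| <= 1.

(* Main.v *)
Require Import Defs.
From mathcomp Require Import all_boot all_order all_algebra.
From mathcomp Require Import zify ring lra.
Set Implicit Arguments. Unset Strict Implicit. Unset Printing Implicit Defensive.
Import Order.TTheory GRing.Theory Num.Theory.
Local Open Scope ring_scope.


Definition lead (s : seq int) : int := head 0 [seq x <- s | x != 0].

Fixpoint wa (s : seq int) : Prop :=
  match s with
  | [::] => True
  | x :: t => wa t /\ (x = 0 \/ ((x = 1 \/ x = -1) /\ (lead t = 0 \/ lead t = -x)))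
  end.

Lemma m1S2 n : (-1 : int) ^+ n.+2 = (-1) ^+ n.
Proof. by rewrite !exprS mulrA mulN1r opprK mul1r. Qed.

Lemma alt1_nil : alt1 [::].
Proof. by left. Qed.

Lemma alt1_cons x t : alt1 (x :: t) <->
  (x = 1 \/ x = -1) /\ alt1 t /\ (t = [::] \/ head 0 t = -x).
Proof.
split.
- case=> H.
  + have Hx : x = -1 by have := H 0%N erefl; rewrite expr1.
    split; first by right.
    split.
    * right=> i Hi. have := H i.+1 Hi. by rewrite /= !exprS.
    * case: t H=> [|y t] H; [by left|right].
      have := H 1%N erefl. rewrite /= Hx. move=> ->. by rewrite sqrrN expr1n opprK.
  + have Hx : x = 1 by have := H 0%N erefl; rewrite /= sqrrN expr1n.
    split; first by left.
    split.
    * left=> i Hi. have := H i.+1 Hi. rewrite /= => ->. by rewrite m1S2.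
    * case: t H=> [|y t] H; [by left|right].
      have := H 1%N erefl; rewrite /= Hx => ->. by rewrite exprS expr2 mulrN1 opprK mulN1r.
- case=> Hx [Ht Hh].
  case: Hx => Hx.
  + right. case=> [|i] Hi; first by rewrite Hx /= expr2 mulrN1 opprK.
    rewrite /=. case: Hh => Hh; first by move: Hi; rewrite Hh.
    case: Ht => Ht.
    * rewrite Ht //. by rewrite m1S2.
    * exfalso. case: t Hh Ht Hi => [|y t] //= Hh Ht _.
      have := Ht 0%N erefl. by rewrite /= Hh Hx sqrrN expr1n.
  + left. case=> [|i] Hi; first by rewrite Hx /= expr1.
    rewrite /=. case: Hh => Hh; first by move: Hi; rewrite Hh.
    case: Ht => Ht.
    * exfalso. case: t Hh Ht Hi => [|y t] //= Hh Ht _.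
      have := Ht 0%N erefl. by rewrite /= Hh Hx opprK expr1.
    * by rewrite Ht // ?m1S2.
Qed.

Lemma lead_nil s : [seq x <- s | x != 0] = [::] <-> lead s = 0.
Proof.
rewrite /lead; split=> [->//|].
case E: [seq x <- s | x != 0] => [//|y t] /= Hy.
have : y \in [seq x <- s | x != 0] by rewrite E mem_head.
by rewrite mem_filter Hy eqxx.
Qed.

Lemma wa_weak s : weak_alt1 s <-> wa s.
Proof.
elim: s => [|x s IH]; first by split=> // _; split=> //; exact: alt1_nil.
rewrite /weak_alt1 /= -IH /weak_alt1.
have Hm : (forall y, y \in x :: s -> y \in [:: -1; 0; 1]) <->
   (x \in [:: -1;0;1]) /\ (forall y, y \in s -> y \in [:: -1; 0; 1]).
  split.
    move=> H; split; [apply: H; exact: mem_head | move=> y Hy; apply: H; by rewrite in_cons Hy orbT].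
  case=> H1 H2 y; rewrite in_cons => /orP [/eqP -> // | ]; exact: H2.
rewrite Hm.
case: (eqVneq x 0) => [->|Hx].
- rewrite /=. split; first by case=> [[_ H1] H2]; split=> //; left.
  by case=> [[H1 H2] _].
- rewrite /= alt1_cons.
  have Hx' : x \in [:: -1;0;1] <-> (x = 1 \/ x = -1).
    rewrite !inE (negbTE Hx) /=.
    split=> [/orP [/eqP->|/eqP->] | [->|->]]; by [right|left|rewrite eqxx orbT|rewrite eqxx].
  have Hf : ([seq x <- s | x != 0] = [::] \/ head 0 [seq x <- s | x != 0] = -x)
       <-> (lead s = 0 \/ lead s = -x).
    by rewrite -lead_nil.
  have HxF : x <> 0 by apply/eqP.
  rewrite Hx' Hf. tauto.
Qed.

Lemma wa_drop n s : wa s -> wa (drop n s).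
Proof.
elim: s n => [|x s IH] [|n] //= [H _]; exact: IH.
Qed.

Fixpoint Ssum (R : realFieldType) (b : nat -> R) (s : seq int) : R :=
  match s with
  | [::] => 0
  | x :: t => b 0%N * x%:~R + Ssum (fun k => b k.+1) t
  end.

Lemma Ssum_big (R : realFieldType) (b : nat -> R) s :
  Ssum b s = \sum_(k < size s) b k * (nth 0 s k)%:~R.
Proof.
elim: s b => [|x s IH] b /=; first by rewrite big_ord0.
by rewrite big_ord_recl IH.
Qed.

Lemma lead_cons x s : lead (x :: s) = if x != 0 then x else lead s.
Proof. by rewrite /lead /=; case: ifP. Qed.

Lemma altL (R : realFieldType) (b : nat -> R) s : wa s ->
  (forall k, (k < size s)%N -> 0 < b k) ->
  (forall k, (k.+1 < size s)%N -> b k.+1 < b k) ->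
  (lead s = 0 /\ Ssum b s = 0) \/
  ((lead s = 1 \/ lead s = -1) /\ 0 < (lead s)%:~R * Ssum b s <= b 0%N).
Proof.
elim: s b => [|x s IH] b /=; first by left.
move=> [Hw Hx] Hp Hd.
have := IH (fun k => b k.+1) Hw (fun k Hk => Hp k.+1 Hk) (fun k Hk => Hd k.+1 Hk).
have Hb0 := Hp 0%N erefl.
rewrite lead_cons.
case: Hx => [->|[Hx1 Hl]].
- rewrite eqxx rmorph0 mulr0 add0r.
  case=> [[-> ->]|[Hl H]]; first by left.
  right; split=> //.
  case: s {IH Hw Hp} Hd Hl H => [|y s] Hd Hl H; first by case: Hl.
  have := Hd 0%N erefl. move: H. lra.
- have Hx0 : x != 0 by case: Hx1 => ->.
  rewrite Hx0 => HI; right; split=> //.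
  case: HI => [[Hl0 ->]|[Hl' H]].
  + case: Hx1 => ->; rewrite ?rmorphN1 ?rmorph1; lra.
  + case: s {IH Hw Hp} Hd Hl Hl' H => [|y s] Hd Hl Hl' H; first by case: Hl'.
    have := Hd 0%N erefl.
    case: Hl => Hl; first by move: Hl'; rewrite Hl; case.
    move: H; rewrite Hl.
    case: Hx1 => ->; rewrite ?opprK ?rmorphN1 ?rmorph1; lra.
Qed.

Section Main.
Variables (R : realFieldType) (d : nat) (A : 'M[R]_d.+1).
Hypothesis HA : reclusive A.

Lemma Adiag (i : 'I_d.+1) : A i (inord i) = 1.
Proof. by rewrite inord_val; case: HA => _ [-> _]. Qed.

Lemma Aposdec (i : 'I_d.+1) m p : (i <= m)%N -> (m < p)%N -> (p < d.+1)%N ->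
  A i (inord p) < A i (inord m) /\ 0 < A i (inord p).
Proof.
move=> Him Hmp Hp. case: HA => _ [_ H]. apply: H.
- by rewrite inordK // (ltn_trans Hmp).
- by rewrite !inordK // (ltn_trans Hmp).
Qed.

Lemma Apos (i : 'I_d.+1) m : (i <= m)%N -> (m < d.+1)%N -> 0 < A i (inord m).
Proof.
rewrite leq_eqVlt => /orP [/eqP <- _|Him Hm]; first by rewrite Adiag ltr01.
by case: (Aposdec (leqnn i) Him Hm).
Qed.

Lemma Adec (i : 'I_d.+1) m : (i <= m)%N -> (m.+1 < d.+1)%N -> A i (inord m.+1) < A i (inord m).
Proof. by move=> H1 H2; case: (Aposdec H1 (ltnSn m) H2). Qed.

Lemma row_eq (c : 'cV[int]_d.+1) (i : 'I_d.+1) :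
  (A *m map_mx (fun z : int => z%:~R) c) i 0 =
  Ssum (fun k => A i (inord (i + k))) (drop i [seq c j 0 | j <- enum 'I_d.+1]).
Proof.
set s := [seq c j 0 | j <- enum 'I_d.+1].
rewrite !mxE.
transitivity (\sum_(j < d.+1) A i (inord j) * (nth 0 s j)%:~R).
  apply: eq_bigr => j _; rewrite inord_val mxE.
  by rewrite /s (nth_map j) ?size_enum_ord // nth_ord_enum.
rewrite Ssum_big size_drop size_map size_enum_ord.
rewrite -(big_mkord xpredT (fun j => A i (inord j) * (nth 0 s j)%:~R)).
rewrite (@big_cat_nat _ _ _ i) /= ?leq0n //; last exact: ltnW (ltn_ord i).
rewrite big1_seq ?add0r; last first.
  move=> j /andP[_]; rewrite mem_iota add0n subn0 => /andP [_ Hj].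
  case: HA => [H _]. rewrite H ?mul0r // inordK //.
  exact: ltn_trans Hj (ltn_ord i).
have -> : forall F : nat -> R, \sum_(i <= k < d.+1) F k = \sum_(0 <= k < d.+1 - i) F (k + i).
  by move=> F; rewrite -[in LHS](add0n i) big_addn.
rewrite big_mkord. apply: eq_bigr => k _.
by rewrite nth_drop addnC.
Qed.

End Main.

Lemma step0 (R : realFieldType) (x : int) : `|(x%:~R : R)| <= 1 -> x = 0 \/ x = 1 \/ x = -1.
Proof.
rewrite ler_norml => /andP [H1 H2].
have h1 : (x%:~R : R) <= (1:int)%:~R by rewrite rmorph1.
have h2 : ((-1 : int)%:~R : R) <= x%:~R by rewrite rmorphN1.
rewrite ler_int in h1. rewrite ler_int in h2. lia.
Qed.

Lemma step1 (R : realFieldType) (x l : int) (S : R) :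
  `|x%:~R + S| <= 1 -> (l = 1 \/ l = -1) -> 0 < l%:~R * S -> l%:~R * S < 1 ->
  x = 0 \/ ((x = 1 \/ x = -1) /\ l = -x).
Proof.
rewrite ler_norml => /andP [H1 H2] [->|->].
- rewrite rmorph1 mul1r => H3 H4.
  have h1 : (x%:~R : R) < (1:int)%:~R by rewrite rmorph1; lra.
  have h2 : ((-1 : int)%:~R : R) < (x + 1)%:~R by rewrite rmorphN1 rmorphD rmorph1 /=; lra.
  rewrite ltr_int in h1. rewrite ltr_int in h2.
  have : x = 0 \/ x = -1 by lia.
  case=> ->; [by left | right; split; [by right | by []]].
- rewrite rmorphN1 mulN1r => H3 H4.
  have h1 : ((x - 1)%:~R : R) < (1:int)%:~R by rewrite rmorphB rmorph1 /=; lra.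
  have h2 : ((-1 : int)%:~R : R) < x%:~R by rewrite rmorphN1; lra.
  rewrite ltr_int in h1. rewrite ltr_int in h2.
  have : x = 0 \/ x = 1 by lia.
  case=> ->; [by left | right; split; [by left | by []]].
Qed.


Theorem mainTheorem18 (R : realFieldType) (d : nat) (A : 'M[R]_d) (c : 'cV[int]_d) :
  reclusive A ->
  (supnorm_le1 (A *m map_mx (fun z : int => z%:~R) c) <->
   weak_alt1 [seq c j 0 | j <- enum 'I_d]).
Proof.
case: d A c => [|d] A c HA.
  have -> : enum 'I_0 = [::] by apply/size0nil; rewrite size_enum_ord.
  split=> _; first by apply/wa_weak.
  by case.
set s := [seq c j 0 | j <- enum 'I_d.+1].
have Hsz : size s = d.+1 by rewrite size_map size_enum_ord.
split.
- move=> Hn. apply/wa_weak.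
  suff H : forall n, (n <= d.+1)%N -> wa (drop (d.+1 - n) s).
    by have := H d.+1 (leqnn _); rewrite subnn drop0.
  elim=> [|n IH] Hn'.
    by rewrite subn0 drop_oversize ?Hsz.
  have Hi : (d - n < d.+1)%N by rewrite ltnS leq_subr.
  have IH' := IH (ltnW Hn').
  have E : (d.+1 - n = (d - n).+1)%N by rewrite subSn.
  rewrite E in IH'.
  rewrite subSS (drop_nth 0) ?Hsz //.
  have Hr := Hn (Ordinal Hi).
  rewrite (row_eq HA) [X in Ssum _ X](drop_nth 0) ?Hsz // /= addn0 in Hr.
  have Ad : A (Ordinal Hi) (inord (d - n)) = 1 := Adiag HA (Ordinal Hi).
  rewrite Ad mul1r in Hr.
  set t := drop (d - n).+1 s in IH' Hr *.
  have Hst : size t = (d - (d - n))%N by rewrite size_drop Hsz subSS.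
  have Hpos : forall k, (k < size t)%N -> 0 < A (Ordinal Hi) (inord (d - n + k.+1)).
    move=> k; rewrite Hst => Hk.
    apply: (@Apos _ _ _ HA (Ordinal Hi)); rewrite /=; lia.
  have Hdec : forall k, (k.+1 < size t)%N ->
      A (Ordinal Hi) (inord (d - n + k.+2)) < A (Ordinal Hi) (inord (d - n + k.+1)).
    move=> k; rewrite Hst => Hk. rewrite addnS.
    apply: (@Adec _ _ _ HA (Ordinal Hi)); rewrite /=; lia.
  have := altL IH' Hpos Hdec.
  split=> //.
  rewrite -/s in Hr.
  case: H => [[Hl0 HS]|[Hl /andP [HS1 HS2]]].
  + rewrite HS addr0 in Hr.
    case: (step0 Hr) => [->|[->|->]]; first by left.
    * by right; split; [left | left].
    * by right; split; [right | left].
  + have Ht0 : (0 < size t)%N.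
      case E0 : t Hl => [|y t'] //=. by rewrite /lead /=; case.
    have Hb1 : A (Ordinal Hi) (inord (d - n + 1)) < 1.
      rewrite addn1 -Ad. apply: (@Adec _ _ _ HA (Ordinal Hi)); rewrite /=; lia.
    have := step1 Hr Hl HS1 (le_lt_trans HS2 Hb1).
    case=> [->|[Hx Hlx]]; first by left.
    by right; split=> //; right.
- move=> /wa_weak Hw i. rewrite (row_eq HA) -/s.
  have Hwi := wa_drop i Hw.
  set t := drop i s in Hwi *.
  have Hst : size t = (d.+1 - i)%N by rewrite size_drop Hsz.
  have Hpos : forall k, (k < size t)%N -> 0 < A i (inord (i + k)).
    move=> k; rewrite Hst => Hk.
    apply: (@Apos _ _ _ HA i); lia.
  have Hdec : forall k, (k.+1 < size t)%N ->
      A i (inord (i + k.+1)) < A i (inord (i + k)).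
    move=> k; rewrite Hst => Hk. rewrite addnS.
    apply: (@Adec _ _ _ HA i); lia.
  case: (altL Hwi Hpos Hdec) => [[_ ->]|[Hl /andP [HS1 HS2]]].
    by rewrite normr0 ler01.
  rewrite addn0 (Adiag HA) in HS2.
  rewrite ler_norml.
  case: Hl => Hl; rewrite Hl ?rmorph1 ?rmorphN1 ?mul1r ?mulN1r in HS1 HS2;
    apply/andP; split; lra.
Qed.
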